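(* Let $P$ be a subgroup of $I_K(\mathfrak{n})$ with $P_{K,1}(\mathfrak{n})\subseteq P\subseteq P_K(\mathfrak{n})$ and let $\Gamma$ be any subgroup of $\mathrm{SL}_2(\mathbb{Z})$. Suppose the map $\phi_\Gamma:\mathcal{Q}_N(d_K)/\sim_\Gamma\to I_K(\mathfrak{n})/P$, $[Q]\mapsto[[\omega_Q,1]]$, is well defined (i.e. $Q\sim_\Gamma Q'$ implies $[\omega_Q,1]P=[\omega_{Q'},1]P$). Then $\phi_\Gamma$ is surjective.
   Context: Let $K$ be an imaginary quadratic field with discriminant $d_K$ and ring of integers $\mathcal{O}_K$. Let $N$ be a positive integer and $\mathfrak{n}=N\mathcal{O}_K$. $I_K(\mathfrak{n})$ denotes the group of fractional ideals of $K$ relatively prime to $\mathfrak{n}$, $P_K(\mathfrak{n})$ its subgroup of principal fractional ideals, and $P_{K,1}(\mathfrak{n})=\{\nu\mathcal{O}_K:\nu\in K^*,\ \nu\equiv^*1\pmod{\mathfrak{n}}\}$, where $\equiv^*$ is multiplicative congruence. $\mathcal{Q}(d_K)$ is the set of primitive positive definite binary quadratic forms $ax^2+bxy+cy^2\in\mathbb{Z}[x,y]$ with $b^2-4ac=d_K$, and $\mathcal{Q}_N(d_K)=\{ax^2+bxy+cy^2\in\mathcal{Q}(d_K):\gcd(N,a)=1\}$. For $Q=ax^2+bxy+cy^2\in\mathcal{Q}(d_K)$, $\omega_Q=(-b+\sqrt{d_K})/(2a)\in\mathbb{H}$ and $[\omega_Q,1]=\mathbb{Z}\omega_Q+\mathbb{Z}$,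 which is a fractional ideal of $K$ lying in $I_K(\mathfrak{n})$ when $Q\in\mathcal{Q}_N(d_K)$. For $\gamma\in\mathrm{SL}_2(\mathbb{Z})$, $Q^\gamma(x,y)=Q(\gamma\,(x,y)^T)$. For a subgroup $\Gamma\subseteq\mathrm{SL}_2(\mathbb{Z})$, the relation $\sim_\Gamma$ on $\mathcal{Q}_N(d_K)$ is: $Q\sim_\Gamma Q'$ iff $Q'=Q^\gamma$ for some $\gamma\in\Gamma$. *)

(* Defs.v *)
(* K = Q(sqrt d) realised inside algC. *)
From HB Require Import structures.
From mathcomp Require Import all_boot all_order all_algebra all_field.
Set Implicit Arguments. Unset Strict Implicit. Unset Printing Implicit Defensive.
Import Order.TTheory GRing.Theory Num.Theory.
Local Open Scope ring_scope.

Definition sqfree (n : nat) : Prop := forall p : nat, prime p -> ~~ (p * p %| n)%N.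

Definition imag_quad_disc (d : int) : Prop :=
  d < 0 /\
  ((d %% 4 = 1)%Z /\ sqfree `|d|%N \/
   exists m : int, d = 4 * m /\ ((m %% 4 = 2)%Z \/ (m %% 4 = 3)%Z) /\ sqfree `|m|%N).

Definition sqd (d : int) : algC := sqrtC (d%:~R).

Definition inK (d : int) (x : algC) : Prop :=
  exists a b : rat, x = ratr a + ratr b * sqd d.
Definition inOK (d : int) (x : algC) : Prop := inK d x /\ x \in Aint.

Definition cset := algC -> Prop.

Definition is_frac_ideal (d : int) (I : cset) : Prop :=
  (forall x, I x -> inK d x) /\ I 0 /\ (exists x, I x /\ x != 0) /\
  (forall x y, I x -> I y -> I (x + y)) /\
  (forall r x, inOK d r -> I x -> I (r * x)) /\
  (exists c, inOK d c /\ c != 0 /\ forall x, I x -> inOK d (c * x)).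

Definition imul (I J : cset) : cset := fun x =>
  exists s : seq (algC * algC),
    (forall p, p \in s -> I p.1 /\ J p.2) /\ x = \sum_(p <- s) p.1 * p.2.

Definition principal (d : int) (nu : algC) : cset :=
  fun x => exists y, inOK d y /\ x = nu * y.

Definition integral_coprime (d : int) (N : nat) (B : cset) : Prop :=
  is_frac_ideal d B /\ (forall x, B x -> inOK d x) /\
  exists x y, B x /\ inOK d y /\ x + N%:R * y = 1.

Definition in_IKn (d : int) (N : nat) (A : cset) : Prop :=
  is_frac_ideal d A /\
  exists B C, integral_coprime d N B /\ integral_coprime d N C /\ imul A C = B.

Definition iinv (d : int) (A : cset) : cset :=
  fun x => inK d x /\ forall y, A y -> inOK d (x * y).

Definition mcong1 (d : int) (N : nat) (nu : algC) : Prop :=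
  exists al be, inOK d al /\ inOK d be /\ be != 0 /\ nu = al / be /\
    (exists u v, inOK d u /\ inOK d v /\ be * u + N%:R * v = 1) /\
    (exists g, inOK d g /\ al - be = N%:R * g).

Definition in_PKn (d : int) (N : nat) (A : cset) : Prop :=
  in_IKn d N A /\ exists nu, inK d nu /\ nu != 0 /\ A = principal d nu.
Definition in_PK1n (d : int) (N : nat) (A : cset) : Prop :=
  exists nu, inK d nu /\ nu != 0 /\ mcong1 d N nu /\ A = principal d nu.

Definition ideal_subgroup (d : int) (N : nat) (P : cset -> Prop) : Prop :=
  (forall A, P A -> in_IKn d N A) /\ P (inOK d) /\
  (forall A B, P A -> P B -> P (imul A B)) /\
  (forall A, P A -> P (iinv d A)).

(* binary quadratic forms a x^2 + b x y + c y^2 *)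
Definition bqf := (int * int * int)%type.
Definition fa (Q : bqf) : int := Q.1.1.
Definition fb (Q : bqf) : int := Q.1.2.
Definition fc (Q : bqf) : int := Q.2.

Definition in_Qd (d : int) (Q : bqf) : Prop :=
  fb Q ^+ 2 - 4 * fa Q * fc Q = d /\ 0 < fa Q /\
  gcdz (fa Q) (gcdz (fb Q) (fc Q)) = 1.
Definition in_QNd (d : int) (N : nat) (Q : bqf) : Prop :=
  in_Qd d Q /\ gcdz (N%:Z) (fa Q) = 1.

Definition omegaQ (d : int) (Q : bqf) : algC :=
  ((- fb Q)%:~R + sqd d) / (2 * fa Q)%:~R.

Definition lattice1 (w : algC) : cset :=
  fun x => exists m n : int, x = m%:~R * w + n%:~R.

(* Q^gamma (x,y) = Q (gamma (x,y)^T), gamma = [[p,q],[r,s]] *)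
Definition g00 (g : 'M[int]_2) := g ord0 ord0.
Definition g01 (g : 'M[int]_2) := g ord0 ord_max.
Definition g10 (g : 'M[int]_2) := g ord_max ord0.
Definition g11 (g : 'M[int]_2) := g ord_max ord_max.
Definition form_act (Q : bqf) (g : 'M[int]_2) : bqf :=
  let a := fa Q in let b := fb Q in let c := fc Q in
  let p := g00 g in let q := g01 g in let r := g10 g in let s := g11 g in
  (a * p ^+ 2 + b * p * r + c * r ^+ 2,
   2 * a * p * q + b * (p * s + q * r) + 2 * c * r * s,
   a * q ^+ 2 + b * q * s + c * s ^+ 2).

Definition SL2_subgroup (G : 'M[int]_2 -> Prop) : Prop :=
  (forall g, G g -> \det g = 1) /\ G 1%:M /\
  (forall g h, G g -> G h -> G (g *m h)) /\
  (forall g, G g -> G (invmx g)).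

Definition equivG (G : 'M[int]_2 -> Prop) (Q Q' : bqf) : Prop :=
  exists g, G g /\ Q' = form_act Q g.

(* Main.v *)
Require Import Defs.
From HB Require Import structures.
From mathcomp Require Import all_boot all_order all_algebra all_field zify ring lra.
From Stdlib Require Import Classical FunctionalExtensionality PropExtensionality.
Import Order.TTheory GRing.Theory Num.Theory.
Local Open Scope ring_scope.
Section Helpers.
Set Implicit Arguments. Unset Strict Implicit.

Lemma int_min (P : int -> Prop) :
  (exists n, 0 < n /\ P n) ->
  exists n, 0 < n /\ P n /\ forall k, 0 < k -> P k -> n <= k.
Proof.
move=> [n0 [n0p Pn0]].
apply: NNPP => Hno.
have H : forall k : nat, forall n : int, 0 < n -> n <= k%:Z -> ~ P n.
  elim=> [|k IH] n np nk Pn; first by lia.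
  apply: Hno; exists n; split => //; split => // k' k'p Pk'.
  case: (lerP n k') => // Hlt.
  have : ~ P k' by apply: IH => //; lia.
  by [].
have := H `|n0|%N n0 n0p. rewrite gez0_abs; last by lia.
by move=> /(_ (lexx _)).
Qed.

Lemma mod_small_zero (P : int -> Prop) (a k : int) :
  0 < a -> (forall x, 0 < x -> P x -> a <= x) ->
  P (k %% a)%Z -> (k %% a)%Z = 0.
Proof.
move=> ap amin Pk.
have h0 : 0 <= (k %% a)%Z by apply: modz_ge0; lia.
have h1 : (k %% a)%Z < a by apply: ltz_pmod.
case: (ltrP 0 (k %% a)%Z) => h; last by lia.
have := amin _ h Pk. lia.
Qed.

Section Struct.
Variables (d e : int) (he : 4 * e = d * d - d) (hd : d < 0).
Variable J : int -> int -> Prop.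
Hypothesis Jadd : forall m n m' n', J m n -> J m' n' -> J (m + m') (n + n').
Hypothesis Jscal : forall k m n, J m n -> J (k * m) (k * n).
Hypothesis Jth : forall m n, J m n -> J (- (n * e)) (m + n * d).
Hypothesis Jnz : exists m n, J m n /\ (m != 0 \/ n != 0).

Lemma J_structure : exists g a b c : int, 0 < g /\ 0 < a /\ a * c = b * b + d * b + e /\
  forall m n, J m n <-> exists p q, m = g * (a * q + b * p) /\ n = g * p.
Proof.
have Jlin : forall k m n k' m' n', J m n -> J m' n' -> J (k * m + k' * m') (k * n + k' * n').
  by move=> k m n k' m' n' h h'; apply: Jadd; apply: Jscal.
case: Jnz => m1 [n1 [J1 nz1]].
have Jnorm : J (m1 * m1 + m1 * n1 * d + n1 * n1 * e) 0.
  have := Jlin (m1 + n1 * d) m1 n1 (- n1) (- (n1 * e)) (m1 + n1 * d) J1 (Jth J1).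
  by congr J; ring.
have normp : 0 < m1 * m1 + m1 * n1 * d + n1 * n1 * e.
  have h4 : 4 * (m1 * m1 + m1 * n1 * d + n1 * n1 * e) =
            (2 * m1 + n1 * d) ^+ 2 - n1 * n1 * d.
    transitivity (4 * m1 * m1 + 4 * m1 * n1 * d + n1 * n1 * (4 * e)); first by ring.
    by rewrite he; ring.
  have sq : 0 <= (2 * m1 + n1 * d) ^+ 2 by rewrite sqr_ge0.
  case: (eqVneq n1 0) => [n10|n1nz].
    move: h4; rewrite n10 => h4.
    have : m1 != 0 by case: nz1 => //; rewrite n10.
    move=> m1nz; have hm : m1 < 0 \/ 0 < m1 by lia.
    have mm : 0 < m1 * m1 by case: hm => h; nia.
    nia.
  have : n1 < 0 \/ 0 < n1 by lia.
  move=> hn; have nn : 0 < n1 * n1 by case: hn => h; nia.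
  have nd : n1 * n1 * d < 0 by nia.
  nia.
have [a0 [a0p [Ja0 a0min]]] := int_min (P := fun k => J k 0) (ex_intro _ _ (conj normp Jnorm)).
have Ja0' : J 0 a0 by have := Jth Ja0; congr J; ring.
have [g [gp [[m0 Jg] gmin]]] := int_min (P := fun n => exists m, J m n)
   (ex_intro _ _ (conj a0p (ex_intro _ _ Ja0'))).
have gmin' : forall x, 0 < x -> (exists m, J m x) -> g <= x by [].
have divA : forall k, J k 0 -> exists q, k = a0 * q.
  move=> k Jk; exists (k %/ a0)%Z.
  have hm : (k %% a0)%Z = 0.
    apply: (mod_small_zero a0p a0min).
    have := @Jlin 1 k 0 (- (k %/ a0)%Z) a0 0 Jk Ja0.
    by congr J; [rewrite {1}(divz_eq k a0); ring | ring].
  by rewrite {1}(divz_eq k a0) hm; ring.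
have divG : forall m n, J m n -> exists p, n = g * p /\ J (m - p * m0) 0.
  move=> m n Jmn.
  have Jr : J (m - (n %/ g)%Z * m0) (n %% g)%Z.
    have := @Jlin 1 m n (- (n %/ g)%Z) m0 g Jmn Jg.
    by congr J; [ring | rewrite {1}(divz_eq n g); ring].
  have hm : (n %% g)%Z = 0.
    apply: (@mod_small_zero (fun x => exists m, J m x)) => //.
    by exists (m - (n %/ g)%Z * m0).
  exists (n %/ g)%Z; split; first by rewrite {1}(divz_eq n g) hm; ring.
  by move: Jr; rewrite hm.
have [a' [Ea' _]] := divG _ _ Ja0'.
have Jthg := Jth Jg.
have [b1 [Eb1 Jb1]] := divG _ _ Jthg.
(* m0 + g d = g b1, so m0 = g (b1 - d) *)
set b := b1 - d.
have Em0 : m0 = g * b by rewrite /b; lia.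
have [q1 Eq1] := divA _ Jb1.
have Ec : a' * (- q1) = b * b + d * b + e.
  have : g * (a' * (- q1)) = g * (b * b + d * b + e).
    move: Eq1; rewrite Em0 Ea' /b.
    move=> H; nia.
  by move=> H; apply: (mulfI (x := g)); [lia | ].
exists g, a', b, (- q1); split => //; split; first by nia.
split => // m n; split.
- move=> Jmn; have [p [Ep Jp]] := divG _ _ Jmn.
  have [q Eq] := divA _ Jp.
  exists p, q; split => //.
  rewrite Em0 Ea' in Eq; lia.
- move=> [p [q [-> ->]]].
  have := @Jlin q a0 0 p m0 g Ja0 Jg.
  by congr J; rewrite ?Em0 ?Ea'; ring.
Qed.
End Struct.

Lemma sqf1 (n k : int) : n != 0 -> sqfree `|n|%N -> 0 < k -> (k * k %| n)%Z -> k = 1.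
Proof.
move=> nz sq kp dv.
have dvn : (`|k|%N * `|k|%N %| `|n|%N)%N by move: dv; rewrite /dvdz abszM.
case: (eqVneq `|k|%N 1%N) => [k1|k1]; first by lia.
have kgt : (1 < `|k|%N)%N by lia.
have pp := pdiv_prime kgt.
have := sq _ pp; rewrite (dvdn_trans _ dvn) //.
by apply: dvdn_mul; apply: pdiv_dvd.
Qed.

Lemma sq_div_disc (d k : int) : imag_quad_disc d -> 0 < k -> (k * k %| d)%Z ->
  k = 1 \/ (k = 2 /\ exists m, d = 4 * m /\ ((m %% 4 = 2)%Z \/ (m %% 4 = 3)%Z)).
Proof.
move=> [dn [[d1 sq]|[m [Em [m4 sq]]]]] kp dv.
  by left; apply: (sqf1 (n := d)) => //; lia.
have mnz : m != 0 by lia.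
case: (boolP (odd `|k|%N)) => ko.
  left; apply: (sqf1 (n := m)) => //.
  have cop : coprimez (k * k) 4.
    rewrite coprimezE abszM.
    have -> : `|4|%N = (2 * 2)%N by [].
    by rewrite coprimeMl !coprimeMr coprimen2 ko.
  by rewrite -(Gauss_dvdzl _ cop) mulrC -Em.
right.
have [k' Ek] : exists k', k = 2 * k'.
  exists (k %/ 2)%Z; have := divz_eq k 2.
  have : (k %% 2 = 0)%Z.
    have -> : k = (`|k|%N)%:Z by lia.
    by rewrite modz_nat modn2 (negbTE ko).
  lia.
have k'p : 0 < k' by lia.
have dv' : (k' * k' %| m)%Z.
  move: dv; rewrite Em Ek.
  have -> : 2 * k' * (2 * k') = 4 * (k' * k') by ring.
  by rewrite dvdz_mul2l.
have := sqf1 mnz sq k'p dv'. move=> k'1; split; first by lia.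
by exists m.
Qed.

Lemma disc_primitive (d a b c : int) : imag_quad_disc d -> b ^+ 2 - 4 * a * c = d ->
  gcdz a (gcdz b c) = 1.
Proof.
move=> hd Ed.
set g := gcdz a (gcdz b c).
have ga : (g %| a)%Z by apply: dvdz_gcdl.
have gb : (g %| b)%Z by apply: (dvdz_trans (dvdz_gcdr _ _)); apply: dvdz_gcdl.
have gc : (g %| c)%Z by apply: (dvdz_trans (dvdz_gcdr _ _)); apply: dvdz_gcdr.
have [a1 Ea] := dvdzP ga.
have [b1 Eb] := dvdzP gb.
have [c1 Ec] := dvdzP gc.
have g0 : 0 <= g by rewrite /g /gcdz.
have Ed' : d = g * g * (b1 ^+ 2 - 4 * a1 * c1).
  by rewrite -Ed Ea Eb Ec; ring.
case: (eqVneq g 0) => [g0'|gnz].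
  by move: hd => [dn _]; move: Ed'; rewrite g0' !mul0r => E; move: dn; rewrite E ltxx.
have gp : 0 < g by rewrite lt0r gnz.
have dvg : (g * g %| d)%Z by rewrite Ed'; apply: dvdz_mulr.
case: (sq_div_disc hd gp dvg) => [//|[g2 [m [Em m4]]]].
exfalso.
have Em' : m = b1 ^+ 2 - 4 * a1 * c1.
  move: Ed'; rewrite Em g2 => E.
  by apply: (mulfI (x := 4)) => //; rewrite E.
clear -Em' m4.
have [r [Er|Er]] : exists r, b1 = 2 * r \/ b1 = 2 * r + 1.
  exists (b1 %/ 2)%Z; have := divz_eq b1 2.
  have h2 : (2:int) != 0 by []. have h2' : (0:int) < 2 by [].
  have := modz_ge0 b1 h2.
  have := ltz_pmod b1 h2'. clear; lia.
- have : m = 4 * (r * r - a1 * c1) by rewrite Em' Er; ring.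
  move: m4; clear; lia.
- have : m = 4 * (r * r + r - a1 * c1) + 1 by rewrite Em' Er; ring.
  move: m4; clear; lia.
Qed.


Lemma par (x : int) : exists s, x = 2 * s \/ x = 2 * s + 1.
Proof.
exists (x %/ 2)%Z; have := divz_eq x 2.
have h2 : (2:int) != 0 by []. have h2' : (0:int) < 2 by [].
have := modz_ge0 x h2.
have := ltz_pmod x h2'. clear; lia.
Qed.

Lemma IntT (d U V : int) (t : rat) : imag_quad_disc d ->
  t ^+ 2 * d%:~R = (U ^+ 2 - 4 * V)%:~R ->
  exists n mm : int, t = n%:~R /\ U - n * d = 2 * mm.
Proof.
move=> hd E.
set p := numq t. set q := denq t.
have qp : 0 < q := denq_gt0 t.
have Et : t = p%:~R / q%:~R by rewrite divq_num_den.
have qnz : (q%:~R : rat) != 0 by rewrite intr_eq0; lia.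
have Eint : p * p * d = (U ^+ 2 - 4 * V) * (q * q).
  apply: (intr_inj (R := rat)).
  rewrite !rmorphM /= -E Et; field; done.
have cop : coprimez (q * q) (p * p).
  rewrite coprimezE !abszM.
  have c := coprime_num_den t.
  by rewrite coprimeMl !coprimeMr coprime_sym c.
have dv : (q * q %| d)%Z.
  rewrite -(Gauss_dvdzr d cop) Eint; apply: dvdz_mull; exact: dvdzz.
case: (sq_div_disc hd qp dv) => [q1|[q2 [m [Em m4]]]].
- have tp : t = p%:~R.
    by rewrite {1}Et q1 divr1.
  exists p; suff [mm Hmm] : exists mm, U - p * d = 2 * mm by exists mm; split.
  move: Eint; rewrite q1 mulr1 => Eint.
  have [u [Eu|Eu]] := par U; have [r [Er|Er]] := par p.
  + by exists (u - r * d); rewrite Eu Er; ring.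
  + case: hd => dn [[d1 _]|[m [Em _]]].
    * exfalso; move: Eint; rewrite Eu Er.
      have [k Ek] : exists k, d = 4 * k + 1 by exists (d %/ 4)%Z; have := divz_eq d 4; lia.
      rewrite Ek => H.
      have : 4 * (r * r * k * 4 + r * r + r * k * 4 + r + k - u * u + V) + 1 = 0.
        by rewrite -[LHS]addr0 -[X in _ + X](subrr (4 * V)); move: H; lia.
      clear; lia.
    * exists (u - r * d - 2 * m); rewrite Eu Er Em; ring.
  + exfalso; move: Eint; rewrite Eu Er => H.
    have : 4 * (u * u + u - r * r * d - V) + 1 = 0 by move: H; lia.
    clear; lia.
  + case: hd => dn [[d1 _]|[m [Em _]]].
    * have [k Ek] : exists k, d = 4 * k + 1 by exists (d %/ 4)%Z; have := divz_eq d 4; lia.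
      exists (u - r * d - 2 * k); rewrite Eu Er Ek; ring.
    * exfalso; move: Eint; rewrite Eu Er Em => H.
      have : 4 * (u * u + u - (r * r + r) * 4 * m - m - V) + 1 = 0 by move: H; lia.
      clear; lia.
- exfalso.
  have podd : odd `|p|%N.
    have c := coprime_num_den t.
    by move: c; rewrite -/p -/q q2 coprimen2.
  have [r Er] : exists r, p = 2 * r + 1.
    have [r [Er|Er]] := par p; last by exists r.
    by move: podd; rewrite Er abszM /= oddM.
  move: Eint; rewrite q2 Em Er => H.
  have Hm : m + 4 * ((r * r + r) * m) = U ^+ 2 - 4 * V.
    have H1 : 4 * (m + 4 * ((r * r + r) * m)) = (2 * r + 1) * (2 * r + 1) * (4 * m) by ring.
    have H2 : 4 * (U^+2 - 4*V) = (U^+2 - 4*V)*(2*2) by ring.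
    by apply: (mulfI (x := 4)) => //; rewrite H1 H -H2.
  have [u [Eu|Eu]] := par U.
  + have : m = 4 * (u * u - V - (r * r + r) * m) by rewrite -[LHS]addr0; move: Hm; rewrite Eu; lia.
    move: m4; clear; lia.
  + have : m = 4 * (u * u + u - V - (r * r + r) * m) + 1 by move: Hm; rewrite Eu; lia.
    move: m4; clear; lia.
Qed.

Section QF.
Variable d : int.
Hypothesis dneg : d < 0.
Local Notation w := (sqd d).

Lemma sqdK : w ^+ 2 = d%:~R.
Proof. by rewrite /sqd sqrtCK. Qed.

Lemma sqd_nrat (r : rat) : w != ratr r.
Proof.
apply/eqP => E.
have : (0 : algC) <= w ^+ 2 by rewrite E -realEsqr; apply: Creal_Crat; apply: Crat_rat.
rewrite sqdK ler0z; lia.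
Qed.

Lemma coord_uniq (a b a' b' : rat) :
  ratr a + ratr b * w = ratr a' + ratr b' * w -> a = a' /\ b = b'.
Proof.
move=> E.
case: (eqVneq b b') => [Eb|nb].
  by move: E; rewrite Eb => /addIr /fmorph_inj.
exfalso.
have nb' : (ratr (b - b') : algC) != 0 by rewrite fmorph_eq0 subr_eq0.
have := sqd_nrat ((a' - a) / (b - b')).
rewrite fmorph_div /=.
have -> : (ratr (a' - a) : algC) = ratr (b - b') * w.
  have E2 : ratr a + ratr b * w - (ratr a' + ratr b' * w) = 0 by rewrite E subrr.
  rewrite !rmorphB /=.
  by apply/eqP; rewrite -subr_eq0; apply/eqP; rewrite -[RHS]oppr0 -E2; ring.
by rewrite mulrC mulKf // eqxx.
Qed.

Definition th : algC := (d%:~R + w) / 2.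

Lemma int_coord (m n : int) :
  m%:~R + n%:~R * th = ratr (m%:~R + n%:~R * d%:~R / 2) + ratr (n%:~R / 2) * w.
Proof.
rewrite /th !(rmorphD, rmorphM, fmorphV) /= !ratr_int rmorph1.
by field.
Qed.

Lemma icoord_uniq (m n m' n' : int) :
  m%:~R + n%:~R * th = m'%:~R + n'%:~R * th -> m = m' /\ n = n'.
Proof.
rewrite !int_coord => /coord_uniq [E1 E2].
have En : n = n'.
  by apply: (intr_inj (R := rat)); move: E2 => /(congr1 ( *%R^~ 2)); rewrite !divfK.
split => //; move: E1; rewrite En => /addIr; exact: intr_inj.
Qed.
End QF.

Section QF2.
Variables (d e : int).
Hypothesis dneg : d < 0.
Hypothesis he : 4 * e = d * d - d.
Local Notation w := (sqd d).
Local Notation th := (th d).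

Lemma th_prod : th * (d%:~R - th) = e%:~R.
Proof.
have He : (e%:~R : algC) = (d%:~R * d%:~R - d%:~R) / 4.
  have := congr1 (fun z : int => z%:~R : algC) he.
  have h2 : (d * d)%:~R = d%:~R * d%:~R :> algC := intrM _ d d.
  have h4 : (4 * e)%:~R = 4%:~R * e%:~R :> algC := intrM _ 4 e.
  rewrite /= intrB h2 h4 => <-.
  rewrite (_ : (4%:~R : algC) = 4) //. by field.
rewrite He /th.
have Hw : w * w = d%:~R by rewrite -expr2 sqdK.
apply/eqP; rewrite -subr_eq0; apply/eqP.
have -> : (d%:~R + w) / 2 * (d%:~R - (d%:~R + w) / 2) - (d%:~R * d%:~R - d%:~R) / 4
   = (d%:~R - w * w) / 4 :> algC by field.
by rewrite Hw subrr mul0r.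
Qed.

Lemma th_Aint : th \in Aint.
Proof.
pose p := ('X - th%:P) * ('X - (d%:~R - th)%:P).
have Ep : p = 'X^2 - (d%:~R)%:P * 'X + (e%:~R)%:P.
  have gen : forall a b : algC, ('X - a%:P) * ('X - b%:P) = 'X^2 - (a + b)%:P * 'X + (a * b)%:P.
    by move=> a b; rewrite polyCD polyCM; ring.
  rewrite /p gen th_prod; congr (_ - _%:P * _ + _); ring.
apply: (@root_monic_Aint p).
- by rewrite /p rootM root_XsubC eqxx.
- by rewrite /p rpredM // monicXsubC.
- rewrite Ep; apply/polyOverP => i.
  rewrite coefD coefB coefXn coefCM coefX coefC.
  by case: i => [|[|[|i]]] /=; rewrite ?mulr0 ?mulr1 ?subr0 ?add0r ?addr0 ?sub0r ?rpredN ?intr_int.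
Qed.
End QF2.

Section O1.
Variables (d e : int).
Hypothesis hd : imag_quad_disc d.
Hypothesis he : 4 * e = d * d - d.
Local Notation w := (sqd d).
Local Notation th := (th d).

Lemma dneg : d < 0. Proof. by case: hd. Qed.

Lemma sqdJ : w^* = - w.
Proof.
have ww : w * w = d%:~R by rewrite -expr2 sqdK.
have h : (w^*) * (w^*) = w * w by rewrite -rmorphM /= ww rmorph_int.
have : (w^* - w) * (w^* + w) = 0.
  by apply/eqP; rewrite -subr_eq0; apply/eqP; rewrite -[RHS](subrr (w * w)) -{1}h; ring.
move/eqP; rewrite mulf_eq0 => /orP [|]; last by rewrite addr_eq0 => /eqP.
rewrite subr_eq0 => wr.
have : w \is Num.real by rewrite CrealE.
rewrite realEsqr sqdK ler0z; have := dneg; lia.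
Qed.

Lemma inOK_coord (x : algC) : inOK d x <-> exists m n : int, x = m%:~R + n%:~R * th.
Proof.
split.
- move=> [[a [b Ex]] xA].
  have xJ : x^* = ratr a - ratr b * w.
    by rewrite Ex rmorphD /= (conj_Crat (Crat_rat a)) rmorphM /= (conj_Crat (Crat_rat b)) sqdJ; ring.
  have xJA : x^* \in Aint by rewrite Aint_aut.
  have [U EU] : exists U : int, 2 * a = U%:~R.
    have s1 : x + x^* = ratr (2 * a) by rewrite xJ Ex rmorphM /= (ratr_nat _ 2); ring.
    have : (ratr (2 * a) : algC) \is a Num.int.
      by apply: Cint_rat_Aint; [apply: Crat_rat | rewrite -s1 rpredD].
    move/intrP => [U HU]; exists U.
    by move: HU; rewrite -(ratr_int _ U) => /fmorph_inj.
  have [V EV] : exists V : int, a ^+ 2 - b ^+ 2 * d%:~R = V%:~R.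
    have s1 : x * x^* = ratr (a ^+ 2 - b ^+ 2 * d%:~R).
      rewrite xJ Ex !(rmorphB, rmorphM, rmorphXn) /= ratr_int -sqdK; ring.
    have : (ratr (a ^+ 2 - b ^+ 2 * d%:~R) : algC) \is a Num.int.
      by apply: Cint_rat_Aint; [apply: Crat_rat | rewrite -s1 rpredM].
    move/intrP => [V HV]; exists V.
    by move: HV; rewrite -(ratr_int _ V) => /fmorph_inj.
  have Et : (2 * b) ^+ 2 * d%:~R = (U ^+ 2 - 4 * V)%:~R.
    rewrite intrB intrM -EV rmorphXn /= -EU; ring.
  have [n [mm [En Emm]]] := IntT hd Et.
  exists mm, n; rewrite int_coord Ex.
  congr (ratr _ + ratr _ * _).
  + have : 2 * a = 2 * (mm%:~R + n%:~R * d%:~R / 2 : rat).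
      by rewrite EU (_ : U = 2 * mm + n * d) ?intrD ?intrM; [field | lia].
    by move/(mulfI (x := 2)) => ->.
  + by rewrite -En; field.
- move=> [m [n ->]]; split.
  + by exists (m%:~R + n%:~R * d%:~R / 2), (n%:~R / 2); rewrite int_coord.
  + apply: rpredD; first exact: Aint_int.
    by apply: rpredM; [exact: Aint_int | exact: (th_Aint he)].
Qed.
End O1.

Section K.
Variables (d : int).
Hypothesis dneg : d < 0.
Local Notation w := (sqd d).

Lemma ww : w * w = d%:~R. Proof. by rewrite -expr2 sqdK. Qed.

Lemma inK_add x y : inK d x -> inK d y -> inK d (x + y).
Proof.
move=> [a [b ->]] [a' [b' ->]]; exists (a + a'), (b + b').
by rewrite !rmorphD; ring.
Qed.

Lemma inK_mul x y : inK d x -> inK d y -> inK d (x * y).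
Proof.
move=> [a [b ->]] [a' [b' ->]]; exists (a * a' + b * b' * d%:~R), (a * b' + a' * b).
rewrite !(rmorphD, rmorphM) /= ratr_int -ww; ring.
Qed.

Lemma inK_rat r : inK d (ratr r).
Proof. by exists r, 0; rewrite rmorph0 mul0r addr0. Qed.

Lemma inK_int (m : int) : inK d m%:~R.
Proof. by rewrite -ratr_int; apply: inK_rat. Qed.

Lemma inK_inv x : inK d x -> inK d x^-1.
Proof.
move=> [a [b Ex]].
case: (eqVneq x 0) => [->|xnz]; first by rewrite invr0; apply: (inK_int 0).
set n := a ^+ 2 - b ^+ 2 * d%:~R.
have nnz : n != 0.
  apply/eqP => n0; move: xnz; rewrite Ex.
  have h1 : 0 <= a ^+ 2 by apply: sqr_ge0.
  have h2 : 0 <= b ^+ 2 * (- d%:~R) by rewrite mulr_ge0 ?sqr_ge0 // oppr_ge0 lerz0; lia.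
  have ha : a ^+ 2 = 0 by move: n0; rewrite /n; lra.
  have hb : b ^+ 2 * (- d%:~R) = 0 by move: n0; rewrite /n; lra.
  move: ha hb => /eqP; rewrite sqrf_eq0 => /eqP -> /eqP; rewrite mulf_eq0 sqrf_eq0 oppr_eq0 intr_eq0.
  have -> : (d == 0) = false by apply/eqP; lia.
  by rewrite orbF => /eqP ->; rewrite !rmorph0 mul0r addr0 eqxx.
exists (a / n), (- b / n).
have nnz' : (ratr n : algC) != 0 by rewrite fmorph_eq0.
apply: (mulfI xnz); rewrite mulfV //.
rewrite Ex !(rmorphM, fmorphV, rmorphN) /=.
have En : ratr n = ratr a ^+ 2 - ratr b ^+ 2 * w * w :> algC.
  rewrite /n !(rmorphB, rmorphM, rmorphXn) /= ratr_int -ww; ring.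
apply/eqP; rewrite eq_sym -subr_eq0; apply/eqP.
have -> : (ratr a + ratr b * w) * (ratr a * (ratr n)^-1 + - ratr b * (ratr n)^-1 * w) - 1
  = (ratr a ^+ 2 - ratr b ^+ 2 * w * w - ratr n) / ratr n :> algC by field.
by rewrite En subrr mul0r.
Qed.

Lemma inK_div x y : inK d x -> inK d y -> inK d (x / y).
Proof. by move=> hx hy; apply: inK_mul => //; apply: inK_inv. Qed.

Lemma inOK_add x y : inOK d x -> inOK d y -> inOK d (x + y).
Proof. by move=> [kx ax] [ky ay]; split; [apply: inK_add | apply: rpredD]. Qed.
Lemma inOK_mul x y : inOK d x -> inOK d y -> inOK d (x * y).
Proof. by move=> [kx ax] [ky ay]; split; [apply: inK_mul | apply: rpredM]. Qed.
Lemma inOK_int (m : int) : inOK d m%:~R.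
Proof. by split; [apply: inK_int | apply: Aint_int]. Qed.
End K.

Lemma bez (a b x y : int) : x * a + y * b = 1 -> coprimez a b.
Proof. by move=> h; apply/coprimezP; exists (x, y). Qed.

Lemma IL (g a b q0 p0 t1 t2 N : int) :
  g * (a * q0 + b * p0) = 1 + N * t1 -> g * p0 = N * t2 ->
  exists k, g * a * q0 = 1 + N * k.
Proof.
move=> h1 h2.
have cop : coprimez N g by apply: (@bez _ _ (- t1) (a * q0 + b * p0)); rewrite [_ * g]mulrC h1; ring.
have : (N %| g * p0)%Z by rewrite h2; apply: dvdz_mulr; exact: dvdzz.
rewrite Gauss_dvdzr // => /dvdzP [p1 Ep1].
exists (t1 - g * b * p1).
have -> : g * a * q0 = g * (a * q0 + b * p0) - g * b * p0 by ring.
by rewrite h1 Ep1; ring.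
Qed.

Lemma key_om (F : fieldType) (a bb c r s q0 N A2 B2 om w : F) :
  a * om ^+ 2 + bb * om + c = 0 -> w = 2 * a * om + bb ->
  2 * A2 * r + B2 * N = 2 * a * q0 - bb * N ->
  2 * A2 * s + B2 * q0 = bb * q0 - 2 * N * c ->
  2 * A2 != 0 -> N * om + q0 != 0 ->
  (- B2 + w) / (2 * A2) = (r * om + s) / (N * om + q0).
Proof.
move=> hF hw h1 h2 nz1 nz2.
apply/eqP; rewrite eqr_div // hw -subr_eq0; apply/eqP.
have -> : (- B2 + (2 * a * om + bb)) * (N * om + q0) - (r * om + s) * (2 * A2)
  = 2 * N * (a * om ^+ 2 + bb * om + c)
    - om * ((2 * A2 * r + B2 * N) - (2 * a * q0 - bb * N))
    - ((2 * A2 * s + B2 * q0) - (bb * q0 - 2 * N * c)) by ring.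
by rewrite hF h1 h2 !subrr mulr0 mulr0 !subr0.
Qed.

Section Sets.
Variables (d e : int).
Hypothesis hd : imag_quad_disc d.
Hypothesis he : 4 * e = d * d - d.

Lemma inOK_th : inOK d (th d).
Proof. by apply/(inOK_coord hd he); exists 0, 1; rewrite mul1r add0r. Qed.

Lemma imul_sub (A C : cset) :
  A 0 -> (forall x y, A x -> A y -> A (x + y)) ->
  (forall r x, inOK d r -> A x -> A (r * x)) ->
  (forall c, C c -> inOK d c) -> forall X, imul A C X -> A X.
Proof.
move=> A0 Aadd Amul Cok X [s [hs ->]].
elim: s hs => [|p s IH] hs; first by rewrite big_nil.
rewrite big_cons; apply: Aadd.
- have [h1 h2] := hs p (mem_head _ _).
  by rewrite mulrC; apply: Amul => //; apply: Cok.
- by apply: IH => q hq; apply: hs; rewrite in_cons hq orbT.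
Qed.

Lemma imul_principal (A : cset) (nu : algC) :
  A 0 -> (forall x y, A x -> A y -> A (x + y)) ->
  (forall r x, inOK d r -> A x -> A (r * x)) ->
  forall X, imul A (principal d nu) X <-> exists z, A z /\ X = nu * z.
Proof.
move=> A0 Aadd Amul X; split.
- move=> [s [hs ->]].
  elim: s hs => [|p s IH] hs; first by exists 0; rewrite big_nil mulr0.
  have [z [Az Ez]] : exists z, A z /\ \sum_(q <- s) q.1 * q.2 = nu * z.
    by apply: IH => q hq; apply: hs; rewrite in_cons hq orbT.
  have [h1 [y [hy Ey]]] := hs p (mem_head _ _).
  exists (y * p.1 + z); split; first by apply: Aadd => //; apply: Amul.
  by rewrite big_cons Ez Ey; ring.
- move=> [z [Az ->]]; exists [:: (z, nu)]; split.
  + move=> p; rewrite mem_seq1 => /eqP -> /=; split => //.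
    by exists 1; split; [apply: (inOK_int d 1) | rewrite mulr1].
  + by rewrite big_cons big_nil addr0 /= mulrC.
Qed.

Lemma CE (N : nat) (B : cset) : (0 < N)%N -> integral_coprime d N B ->
  exists y T, B y /\ y != 0 /\ inOK d T /\ y = 1 + N%:R * T.
Proof.
move=> Np [[_ [B0 [[z0 [Bz0 z0nz]] [Badd [Bmul _]]]]] [Bok [y [t [By [Ot Eyt]]]]]].
have Nnz : (N%:R : algC) != 0 by rewrite pnatr_eq0; lia.
have mN : forall v, inOK d v -> inOK d (- v).
  by move=> v hv; rewrite -mulN1r; apply: inOK_mul => //; apply: (inOK_int d (-1)).
case: (eqVneq y 0) => [y0|ynz].
- exists (y + N%:R * z0), (- t + z0); split.
    apply: Badd => //; apply: Bmul => //; exact: (inOK_int d N).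
  split; first by rewrite y0 add0r mulf_neq0.
  split; first by apply: inOK_add => //; [apply: mN | apply: Bok].
  apply/eqP; rewrite -subr_eq0; apply/eqP.
  have -> : y + N%:R * z0 - (1 + N%:R * (- t + z0)) = y + N%:R * t - 1 by ring.
  by rewrite Eyt subrr.
- exists y, (- t); split => //; split => //; split; first by apply: mN.
  apply/eqP; rewrite -subr_eq0; apply/eqP.
  have -> : y - (1 + N%:R * (- t)) = y + N%:R * t - 1 by ring.
  by rewrite Eyt subrr.
Qed.
End Sets.

End Helpers.

Lemma pos_aux (a A2 X d N2 : int) : 0 < a -> 4 * a * A2 = X - d * N2 -> 0 <= X -> d < 0 -> 0 < N2 -> 0 < A2.
Proof. move=> ap h hX hd hN; have : 0 < - d * N2 by nia. nia. Qed.

Theorem proposition2p3 (d : int) (N : nat) (P : cset -> Prop)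
    (G : 'M[int]_2 -> Prop) :
  imag_quad_disc d -> (0 < N)%N ->
  ideal_subgroup d N P ->
  (forall A, in_PK1n d N A -> P A) ->
  (forall A, P A -> in_PKn d N A) ->
  SL2_subgroup G ->
  (* phi_Gamma is well defined *)
  (forall Q Q', in_QNd d N Q -> in_QNd d N Q' -> equivG G Q Q' ->
     exists B, P B /\ lattice1 (omegaQ d Q') = imul (lattice1 (omegaQ d Q)) B) ->
  (* phi_Gamma is surjective *)
  forall A, in_IKn d N A ->
    exists Q, in_QNd d N Q /\
      exists B, P B /\ lattice1 (omegaQ d Q) = imul A B.
Proof.
move=> hd Np hP hPK1 hPKn hG hwd A hA.
have dneg : d < 0 by case: hd.
have [e he] : exists e : int, 4 * e = d * d - d.
  case: (hd) => dn [[d1 _]|[m [Em _]]].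
  - exists ((d %/ 4)%Z * d); have := divz_eq d 4; rewrite d1 => Ed.
    move: (d %/ 4)%Z Ed => q ->; ring.
  - by exists (m * (4 * m - 1)); rewrite Em; ring.
set w := sqd d.
case: hA => [[AK [A0 [Anz [Aadd [Amul Aden]]]]] [B [C [hB [hC EAC]]]]].
have [x [Tx [Cx [xnz [OTx Ex]]]]] := CE he Np hC.
have [b [Tb [Bb [bnz [OTb Eb]]]]] := CE he Np hB.
have Cok : forall c, C c -> inOK d c by case: hC => _ [].
have Bok : forall c, B c -> inOK d c by case: hB => _ [].
have Ab : A b.
  by apply: (imul_sub (d := d) A0 Aadd Amul Cok); rewrite EAC.
pose I := fun y => exists z, A z /\ y = x * z.
have Iok : forall y, I y -> inOK d y.
  move=> y [z [Az ->]]; apply: Bok; rewrite -EAC.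
  exists [:: (z, x)]; split; first by move=> p; rewrite mem_seq1 => /eqP ->.
  by rewrite big_cons big_nil addr0 mulrC.
have Iadd : forall y y', I y -> I y' -> I (y + y').
  move=> _ _ [z [Az ->]] [z' [Az' ->]]; exists (z + z'); split; [exact: Aadd | ring].
have Imul : forall r y, inOK d r -> I y -> I (r * y).
  move=> r _ hr [z [Az ->]]; exists (r * z); split; [exact: Amul | ring].
have OTh := inOK_th hd he.
set tht := th d.
have thsq : tht * tht = d%:~R * tht - e%:~R.
  have h := th_prod he; rewrite -/tht in h; rewrite -h; ring.
pose J := fun m n : int => I (m%:~R + n%:~R * tht).
have Jadd : forall m n m' n', J m n -> J m' n' -> J (m + m') (n + n').
  move=> m n m' n' h h'; have := Iadd _ _ h h'; rewrite /J.
  by congr I; ring.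
have Jscal : forall k m n, J m n -> J (k * m) (k * n).
  move=> k m n h; have := Imul k%:~R _ (inOK_int d k) h; rewrite /J.
  by congr I; ring.
have Jth : forall m n, J m n -> J (- (n * e)) (m + n * d).
  move=> m n h; have := Imul tht _ OTh h; rewrite /J.
  congr I; apply/eqP; rewrite -subr_eq0; apply/eqP.
  have -> : tht * (m%:~R + n%:~R * tht) - ((- (n * e))%:~R + (m + n * d)%:~R * tht)
     = n%:~R * (tht * tht - (d%:~R * tht - e%:~R)) by ring.
  by rewrite thsq subrr mulr0.
have Iu : I (x * b) by exists b.
have [mu [nu Eu]] : exists mu nu : int, x * b = mu%:~R + nu%:~R * tht.
  by apply/(inOK_coord hd he); apply: Iok.
have Ju : J mu nu by rewrite /J -Eu.
have Jnz : exists m n, J m n /\ (m != 0 \/ n != 0).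
  exists mu, nu; split => //.
  case: (eqVneq mu 0) => [mu0|]; last by left.
  case: (eqVneq nu 0) => [nu0|]; last by right.
  by move: Eu; rewrite mu0 nu0 mul0r addr0 => /eqP; rewrite mulf_eq0 (negbTE xnz) (negbTE bnz).
have [g [a [b' [c0 [gp [ap [Ec JS]]]]]]] := J_structure he dneg Jadd Jscal Jth Jnz.
set T := Tx + Tb + N%:R * Tx * Tb.
have OT : inOK d T.
  apply: inOK_add; first exact: inOK_add.
  by apply: inOK_mul => //; apply: inOK_mul => //; apply: (inOK_int d N).
have [t1 [t2 ET]] := proj1 (inOK_coord hd he T) OT.
have [Emu Enu] : mu = 1 + N%:Z * t1 /\ nu = N%:Z * t2.
  apply: (icoord_uniq dneg); rewrite -Eu Ex Eb.
  have -> : (1 + N%:R * Tx) * (1 + N%:R * Tb) = 1 + N%:R * T by rewrite /T; ring.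
  by rewrite ET; ring.
have [p0 [q0 [Emu' Enu']]] := proj1 (JS mu nu) Ju.
have [k Hk] : exists k, g * a * q0 = 1 + N%:Z * k.
  by apply: (IL (b := b') (p0 := p0) (t1 := t1) (t2 := t2)); rewrite -?Emu' -?Enu'.
have copN : coprimez N%:Z q0.
  apply: (@bez _ _ (- k) (g * a)); rewrite Hk; ring.
have [r [s Hrs]] : exists r s : int, r * q0 - s * N%:Z = 1.
  have [u1 [v1 Huv]] := Bezoutz N%:Z q0.
  exists v1, (- u1); move: copN => /eqP cop; rewrite -cop -Huv; ring.
set Nz := N%:Z.
set bb := - (2 * b' + d).
set A2 := a * q0 ^+ 2 - bb * q0 * Nz + c0 * Nz ^+ 2.
set B2 := bb * (r * q0 + s * Nz) - 2 * (r * Nz * c0 + s * q0 * a).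
set C2 := a * s ^+ 2 - bb * s * r + c0 * r ^+ 2.
have Hdisc : bb ^+ 2 - 4 * a * c0 = d.
  have -> : bb ^+ 2 - 4 * a * c0 = bb ^+ 2 - 4 * (a * c0) by ring.
  rewrite Ec /bb.
  have -> : (- (2 * b' + d)) ^+ 2 - 4 * (b' * b' + d * b' + e) = d * d - 4 * e by ring.
  by rewrite he; ring.
have HdiscQ : B2 ^+ 2 - 4 * A2 * C2 = d.
  have -> : B2 ^+ 2 - 4 * A2 * C2 = (bb ^+ 2 - 4 * a * c0) * (r * q0 - s * Nz) ^+ 2.
    by rewrite /B2 /A2 /C2; ring.
  by rewrite Hdisc Hrs expr1n mulr1.
have Np' : 0 < Nz by rewrite /Nz ltz_nat.
have A2p : 0 < A2.
  have h : 4 * a * A2 = (2 * a * q0 - bb * Nz) ^+ 2 - (bb ^+ 2 - 4 * a * c0) * Nz ^+ 2.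
    by rewrite /A2; ring.
  rewrite Hdisc in h.
  apply: (@pos_aux a A2 _ d _ ap h (sqr_ge0 _) dneg).
  by apply: exprn_gt0.
have copA2 : gcdz Nz A2 = 1.
  apply/eqP; apply: (@bez _ _ (- (g * a * (k * q0 + g * (- bb * q0 + c0 * Nz)) + k)) (g * g * a)).
  apply/eqP; rewrite -subr_eq0; apply/eqP.
  have -> : - (g * a * (k * q0 + g * (- bb * q0 + c0 * Nz)) + k) * Nz + g * g * a * A2 - 1
    = (g * a * q0 - (1 + Nz * k)) * (g * a * q0 + 1) by rewrite /A2; ring.
  by rewrite Hk subrr mul0r.
set Q : bqf := (A2, B2, C2).
have QN : in_QNd d N Q.
  split => //; split; first by rewrite /fa /fb /fc /=.
  split; first by rewrite /fa /=.
  by apply: (disc_primitive hd); rewrite /fa /fb /fc /=.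
exists Q; split => //.
have NzR : (Nz%:~R : algC) = N%:R by [].
have anz : (a%:~R : algC) != 0 by rewrite intr_eq0 (gt_eqF ap).
have gnz : (g%:~R : algC) != 0 by rewrite intr_eq0 (gt_eqF gp).
have Nnz : (Nz%:~R : algC) != 0 by rewrite intr_eq0 (gt_eqF Np').
have wsq : w * w = d%:~R by rewrite /w ww.
set om : algC := (- bb%:~R + w) / (2 * a%:~R).
have hw : w = 2 * a%:~R * om + bb%:~R by rewrite /om; field.
have hF : a%:~R * om ^+ 2 + bb%:~R * om + c0%:~R = 0.
  have -> : a%:~R * om ^+ 2 + bb%:~R * om + c0%:~R
     = (w * w - (bb ^+ 2 - 4 * a * c0)%:~R) / (4 * a%:~R) by rewrite /om; field.
  by rewrite Hdisc wsq subrr mul0r.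
have hth : b'%:~R + tht = a%:~R * om.
  by rewrite /om /tht /th -/w /bb; field.
set D := Nz%:~R * om + q0%:~R.
have Dnz : D != 0.
  apply/eqP => D0.
  have omE : om = ratr (- q0%:~R / Nz%:~R).
    have -> : om = - q0%:~R / Nz%:~R.
      apply/eqP; rewrite -subr_eq0; apply/eqP.
      have -> : om - - q0%:~R / Nz%:~R = D / Nz%:~R by rewrite /D; field.
      by rewrite D0 mul0r.
    by rewrite fmorph_div rmorphN /= !ratr_int.
  have := sqd_nrat dneg (2 * a%:~R * (- q0%:~R / Nz%:~R) + bb%:~R).
  rewrite -/w hw omE !(rmorphD, rmorphM) /= !ratr_int.
  by rewrite rmorph1 (_ : (1 + 1 : algC) = 2) ?eqxx.
have I1 : 2 * A2 * r + B2 * Nz = 2 * a * q0 - bb * Nz.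
  have -> : 2 * A2 * r + B2 * Nz = (2 * a * q0 - bb * Nz) * (r * q0 - s * Nz).
    by rewrite /A2 /B2; ring.
  by rewrite Hrs mulr1.
have I2 : 2 * A2 * s + B2 * q0 = bb * q0 - 2 * Nz * c0.
  have -> : 2 * A2 * s + B2 * q0 = (bb * q0 - 2 * Nz * c0) * (r * q0 - s * Nz).
    by rewrite /A2 /B2; ring.
  by rewrite Hrs mulr1.
have A2nz : 2 * (A2%:~R : algC) != 0 by rewrite mulf_neq0 ?pnatr_eq0 // intr_eq0 (gt_eqF A2p).
have Om : omegaQ d Q = (r%:~R * om + s%:~R) / D.
  have -> : omegaQ d Q = (- B2%:~R + w) / (2 * A2%:~R).
    rewrite /omegaQ /fa /fb /=.
    have -> : ((- B2)%:~R : algC) = - B2%:~R by ring.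
    by have -> : ((2 * A2)%:~R : algC) = 2 * A2%:~R by ring.
  apply: (key_om hF hw) => //.
  + transitivity ((2 * A2 * r + B2 * Nz)%:~R : algC); first by ring.
    by rewrite I1; ring.
  + transitivity ((2 * A2 * s + B2 * q0)%:~R : algC); first by ring.
    by rewrite I2; ring.
set Ta : algC := (k + g * b')%:~R + g%:~R * tht.
set al : algC := g%:~R * a%:~R * D.
have alnz : al != 0 by rewrite /al !mulf_neq0.
have Eal : al = 1 + N%:R * Ta.
  apply/eqP; rewrite -subr_eq0; apply/eqP.
  have -> : al - (1 + N%:R * Ta) = g%:~R * Nz%:~R * (a%:~R * om - (b'%:~R + tht))
       + ((g * a * q0)%:~R - (1 + Nz * k)%:~R) by rewrite /al /D /Ta -NzR; ring.
  by rewrite hth Hk !subrr mulr0 add0r.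
have OTa : inOK d Ta by apply: inOK_add; [apply: inOK_int | apply: inOK_mul => //; apply: inOK_int].
have Oal : inOK d al by rewrite Eal; apply: inOK_add; [apply: (inOK_int d 1) | apply: inOK_mul => //; apply: (inOK_int d N)].
set nuu := x / al.
exists (principal d nuu); split.
  apply: hPK1; exists nuu; split; first by apply: (inK_div dneg); [case: (Cok x Cx) | case: Oal].
  split; first by rewrite /nuu mulf_neq0 ?invr_eq0.
  split => //.
  exists x, al; split; first exact: Cok.
  split => //; split => //; split => //; split.
    exists 1, (- Ta); split; first exact: (inOK_int d 1).
    split; first by rewrite -mulN1r; apply: inOK_mul => //; apply: (inOK_int d (-1)).
    by rewrite Eal; ring.
  exists (Tx - Ta); split; first by apply: inOK_add => //; rewrite -mulN1r; apply: inOK_mul => //; apply: (inOK_int d (-1)).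
  by rewrite Ex Eal; ring.
have charI : forall y, I y <-> exists p q : int, y = g%:~R * a%:~R * (q%:~R + p%:~R * om).
  move=> y; split.
  - move=> Iy; have [m [n Ey]] := proj1 (inOK_coord hd he y) (Iok _ Iy).
    rewrite -/tht in Ey.
    have Jmn : J m n by rewrite /J -Ey.
    have [p [q [Em En]]] := proj1 (JS m n) Jmn.
    exists p, q; rewrite Ey Em En.
    transitivity ((g%:~R : algC) * (a%:~R * q%:~R + p%:~R * (b'%:~R + tht))); first by ring.
    by rewrite hth; ring.
  - move=> [p [q Ey]].
    have Jmn : J (g * (a * q + b' * p)) (g * p) by apply/(JS _ _); exists p, q.
    move: Jmn; rewrite /J; congr I; rewrite Ey.
    transitivity ((g%:~R : algC) * (a%:~R * q%:~R + p%:~R * (b'%:~R + tht))); first by ring.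
    by rewrite hth; ring.
apply: functional_extensionality => X; apply: propositional_extensionality.
rewrite (imul_principal (d := d) nuu A0 Aadd Amul).
split.
- move=> [kk [ll ->]].
  have [z [Az Ez]] : I (g%:~R * a%:~R * ((kk * s + ll * q0)%:~R + (kk * r + ll * Nz)%:~R * om)).
    by apply/charI; exists (kk * r + ll * Nz), (kk * s + ll * q0).
  exists z; split => //.
  have -> : nuu * z = x * z / al by rewrite /nuu; field.
  rewrite -Ez Om /al.
  move: Dnz; rewrite /D => Dnz'.
  by field; rewrite -NzR Dnz' anz gnz.
- move=> [z [Az ->]].
  have [p [q Ey]] := proj1 (charI (x * z)) (ex_intro _ z (conj Az erefl)).
  exists (p * q0 - q * Nz), (q * r - p * s).
  have -> : nuu * z = x * z / al by rewrite /nuu; field.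
  rewrite Ey Om /al.
  have Hrs' : (r%:~R * q0%:~R - s%:~R * Nz%:~R : algC) = 1.
    by transitivity ((r * q0 - s * Nz)%:~R : algC); [ring | rewrite Hrs].
  apply/eqP; rewrite -subr_eq0; apply/eqP.
  have -> : g%:~R * a%:~R * (q%:~R + p%:~R * om) / (g%:~R * a%:~R * D) -
      ((p * q0 - q * Nz)%:~R * ((r%:~R * om + s%:~R) / D) + (q * r - p * s)%:~R)
    = (q%:~R + p%:~R * om) * (1 - (r%:~R * q0%:~R - s%:~R * Nz%:~R)) / D.
    by move: Dnz; rewrite /D => Dnz'; field; rewrite -NzR ?Dnz' ?anz ?gnz.
  by rewrite Hrs' subrr mulr0 mul0r.
Qed.
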